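(* Fix $b\in\mathbb{N}$ and integers $M\ge2$, $N\ge2$. Let $P$ be the $b$-pattern on the rectangle with vertices $(1,1),(M,1),(M,N),(1,N)$ in which every boundary point (i.e. every point of $\{(1,s),(M,s),(r,1),(r,N): 1\le r\le M,\ 1\le s\le N\}$) is a circle and every interior point $(r,s)$ with $1<r<M$, $1<s<N$ is a cross. For $b=1$, $P$ is realizable in $L$ if and only if $M$ and $N$ are both odd. For $b\ge2$, $P$ is realizable in $L$ if and only if $M$ is odd or $N<2^b$. In particular, there are arbitrarily large rectangular regions of $b$-invisible points whose boundary consists of $b$-visible points.
   Context: $L=\mathbb{N}\times\mathbb{N}$. For $r,s\in\mathbb{N}$, $\gcd_b(r,s)=\max\{k\in\mathbb{N} : k\mid r \text{ and } k^b\mid s\}$; $(r,s)$ is $b$-visible if $\gcd_b(r,s)=1$ and $b$-invisible otherwise. A $b$-pattern is obtained by choosing a positive integer $w$ and assigning to each $(r,s)\in L$ with $1\le r\le w$, $1\le s\le w^b$ a cross, a circle, or neither. It is realizable in $L$ if there is $(u,v)\in L$ such that $(u+r,v+s)$ is $b$-visible for every circle $(r,s)$ and $b$-invisible for every cross $(r,s)$. *)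

(* Defs.v *)
(* Convention: the paper's N is the positive integers {1,2,...}. *)
From mathcomp Require Import all_boot.
Set Implicit Arguments. Unset Strict Implicit. Unset Printing Implicit Defensive.

(* gcd_b(r,s) = max { k : k | r and k^b | s }, for r >= 1 (then k <= r). *)
Definition gcdb (b r s : nat) : nat :=
  \max_(k < r.+1 | (k %| r) && (k ^ b %| s)) k.

Definition bvisible (b r s : nat) : bool := gcdb b r s == 1.
Definition binvisible (b r s : nat) : bool := gcdb b r s != 1.

Inductive mark := Cross | Circle | Blank.

(* A b-pattern: a width w and an assignment of marks; only points
   1 <= r <= w, 1 <= s <= w^b are relevant. *)
Record bpattern := BPattern { pw : nat; pmark : nat -> nat -> mark }.

Definition in_box (b : nat) (P : bpattern) (r s : nat) : Prop :=
  1 <= r <= pw P /\ 1 <= s <= pw P ^ b.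

(* Realizable in L = N x N (N positive): exists (u,v), u,v >= 1. *)
Definition realizable (b : nat) (P : bpattern) : Prop :=
  exists u v : nat, 1 <= u /\ 1 <= v /\
    forall r s, in_box b P r s ->
      (pmark P r s = Circle -> bvisible b (u + r) (v + s)) /\
      (pmark P r s = Cross -> binvisible b (u + r) (v + s)).

(* The rectangle pattern: boundary points circles, interior points crosses,
   everything else blank. Width w = maxn M N (so the box contains the
   rectangle when b >= 1). *)
Definition rect_mark (M N r s : nat) : mark :=
  if (1 <= r <= M) && (1 <= s <= N) then
    if (r == 1) || (r == M) || (s == 1) || (s == N) then Circle else Cross
  else Blank.

Definition rect_pattern (M N : nat) : bpattern :=
  BPattern (maxn M N) (rect_mark M N).

(* Main.v *)
Require Import Defs.
From mathcomp Require Import all_boot zify.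
Set Implicit Arguments. Unset Strict Implicit. Unset Printing Implicit Defensive.


Lemma gcdb_ge1 b r s : 0 < r -> 1 <= gcdb b r s.
Proof.
move=> r0; rewrite /gcdb.
have H1 : 1 < r.+1 by [].
apply: (@leq_bigmax_cond _ (fun k : 'I_r.+1 => (k %| r) && (k ^ b %| s)) (fun k => nat_of_ord k) (Ordinal H1)).
by rewrite /= dvd1n exp1n dvd1n.
Qed.

Lemma invis b x y p : 0 < x -> prime p -> p %| x -> p ^ b %| y -> gcdb b x y != 1.
Proof.
move=> x0 pp px pby.
have Hp : p < x.+1 by rewrite ltnS dvdn_leq.
have := (@leq_bigmax_cond _ (fun k : 'I_x.+1 => (k %| x) && (k ^ b %| y)) (fun k => nat_of_ord k) (Ordinal Hp)).
rewrite /= px pby -/(gcdb b x y) => /(_ isT) H; have := prime_gt1 pp; lia.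
Qed.

Lemma vis b x y : 0 < x -> (forall p, prime p -> p %| x -> p ^ b %| y -> False) -> gcdb b x y == 1.
Proof.
move=> x0 H; rewrite eqn_leq gcdb_ge1 // andbT; apply/bigmax_leqP => k /andP[kx kby].
rewrite leqNgt; apply/negP => k1.
apply: (H _ (pdiv_prime k1) (dvdn_trans (pdiv_dvd k) kx)).
exact: dvdn_trans (dvdn_exp2r _ (pdiv_dvd k)) kby.
Qed.

Lemma coprime_prod_seq (T : eqType) a (s : seq T) m :
  (forall j, j \in s -> coprime a (m j)) -> coprime a (\prod_(j <- s) m j).
Proof.
elim: s => [|j s IH] H; first by rewrite big_nil coprimen1.
rewrite big_cons coprimeMr H ?mem_head //=; apply: IH => k ks; apply: H; rewrite inE ks orbT //.
Qed.

Lemma dvd_prod_seq (T : eqType) (s : seq T) m j : j \in s -> m j %| \prod_(k <- s) m k.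
Proof.
elim: s => // k s IH; rewrite inE big_cons => /orP[/eqP->|js].
  exact: dvdn_mulr.
exact/dvdn_mull/IH.
Qed.

Lemma crt (T : eqType) (s : seq T) (m c : T -> nat) :
  (forall i, i \in s -> 0 < m i) ->
  (forall i j, i \in s -> j \in s -> i != j -> coprime (m i) (m j)) ->
  exists x, 0 < x /\ forall i, i \in s -> x = c i %[mod m i].
Proof.
elim: s => [|i s IH] Hpos Hco; first by exists 1.
have H1 : forall j, j \in s -> 0 < m j.
  by move=> j js; apply: Hpos; rewrite inE js orbT.
have H2 : forall j k, j \in s -> k \in s -> j != k -> coprime (m j) (m k).
  by move=> j k js ks; apply: Hco; rewrite inE ?js ?ks orbT.
have [x [x0 Hx]] := IH H1 H2.
case: (boolP (i \in s)) => iS.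
  by exists x; split=> // j; rewrite inE => /orP[/eqP->|]; auto.
set P := \prod_(j <- s) m j.
have cop : coprime (m i) P.
  apply: coprime_prod_seq => j js; apply: Hco; rewrite ?inE ?js ?eqxx ?orbT //.
  by apply/eqP => E; move: iS; rewrite E js.
have Ppos : 0 < P.
  by rewrite /P big_seq; apply: prodn_cond_gt0 => j js; apply: Hpos; rewrite inE js orbT.
exists (chinese (m i) P (c i) x + m i * P); split.
  by rewrite addn_gt0 muln_gt0 Hpos ?mem_head // Ppos orbT.
move=> j; rewrite inE => /orP[/eqP->|js].
  by rewrite mulnC addnC modnMDl chinese_modl.
have dj : m j %| P by exact: dvd_prod_seq.
rewrite -(modn_dvdm _ dj) addnC modnMDl chinese_modr // (modn_dvdm _ dj).
exact: Hx.
Qed.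

Fixpoint pseq (L k : nat) : nat :=
  if k is k'.+1 then s2val (prime_above (pseq L k')) else s2val (prime_above L).

Lemma pseq_prime L k : prime (pseq L k).
Proof. by case: k => [|k] /=; [exact: (s2valP' (prime_above L)) | exact: (s2valP' (prime_above _))]. Qed.

Lemma pseq_inc L k : pseq L k < pseq L k.+1.
Proof. exact: (s2valP (prime_above _)). Qed.

Lemma pseq_gt L k : L < pseq L k.
Proof.
elim: k => [|k IH]; first exact: (s2valP (prime_above L)).
exact: ltn_trans IH (pseq_inc L k).
Qed.

Lemma pseq_inj L : injective (pseq L).
Proof.
have hom : {homo pseq L : i j / i < j >-> i < j}.
  apply: homo_ltn; [exact: ltn_trans | exact: pseq_inc].
move=> i j E; case: (ltngtP i j) => // H; have := hom _ _ H; rewrite E ltnn //.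
Qed.


Lemma dvd_cong m a c s : a = c %[mod m] -> (m %| a + s) = (m %| c + s).
Proof. by move=> H; rewrite /dvdn -(modnDml a) H modnDml. Qed.

Lemma dvd_close p a x y : p %| a + x -> p %| a + y -> x < p -> y < p -> x = y.
Proof.
wlog xy : x y / x <= y.
  move=> W hx hy xp yp; case: (leqP x y) => h; first exact: W.
  by symmetry; apply: W => //; exact: ltnW.
move=> hx hy xp yp.
have E : a + y = (a + x) + (y - x) by lia.
have d : p %| y - x by move: hy; rewrite E dvdn_addr.
case: (posnP (y - x)) => [|h]; first lia.
have := dvdn_leq h d; lia.
Qed.



Lemma dvdn_leS d m : d %| m.+1 -> d <= m.+1.
Proof. exact: dvdn_leq. Qed.

Lemma verify b M N u v (p : nat -> nat -> nat) :
  0 < b -> 1 < M -> 1 < N -> (~~ odd M -> N < 2 ^ b) -> (b = 1 -> odd N) -> 0 < u -> 0 < v ->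
  (forall r s, 1 < r < M -> 1 < s < N -> prime (p r s) /\ M + N < p r s) ->
  2 %| u ->
  (forall q, prime q -> 2 < q -> q <= M + N -> u = (if q %| M then 1 else 0) %[mod q]) ->
  (forall r s, 1 < r < M -> 1 < s < N -> p r s %| u + r) ->
  (forall q, prime q -> q <= M + N -> v = (if q ^ b %| N then 1 else 0) %[mod q ^ b]) ->
  (forall r s, 1 < r < M -> 1 < s < N -> p r s ^ b %| v + s) ->
  (forall q r, prime q -> M + N < q -> 0 < r <= M -> q %| u + r ->
      (exists r' s', [/\ 1 < r' < M, 1 < s' < N & q = p r' s']) \/ q %| v) ->
  realizable b (rect_pattern M N).
Proof.
move=> b0 M1 N1 HM HN u0 v0 Hp Ueven U1 U2 V1 V2 V3.
exists u, v; split=> //; split=> //.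
move=> r s _; rewrite /= /rect_mark.
case: ifP => [/andP[/andP[r1 rM] /andP[s1 sN]]|]; last by split.
case: ifP => HB; split=> // _.
- apply: vis; first by rewrite addn_gt0 u0.
  move=> q qp qu qv.
  have qqb : q %| q ^ b by apply: dvdn_exp.
  have qv1 : q %| v + s by exact: dvdn_trans qv.
  have q1 := prime_gt1 qp.
  have qb : q <= q ^ b by have := leq_pexp2l (ltnW q1) b0; rewrite expn1.
  have Hrow : q <= M + N -> (s == 1) || (s == N) -> False.
    move=> qL Hs.
    have Vq := V1 q qp qL.
    move: qv; rewrite (dvd_cong _ Vq); clear Vq.
    case/orP: Hs => /eqP Es; subst s.
    + case: ifP => hN /= H.
      * have le2 := dvdn_leq (isT : 0 < 1 + 1) H.
        have [b1|b2] : b = 1 \/ 2 <= b by clear -b0; lia.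
          subst b; rewrite expn1 in H hN le2.
          have q2 : q = 2 by clear -q1 le2; lia.
          subst q; have := HN erefl; rewrite dvdn2 in hN; by rewrite (negbTE hN).
        have := leq_pexp2l (ltnW q1) b2; rewrite expnS expn1 => h.
        have := leq_mul q1 q1; move: h le2; clear; lia.
      * have := dvdn_leq (isT : 0 < 0 + 1) H; clear -q1 qb; lia.
    + case: ifP => hN /= H.
      * rewrite addnC dvdn_addr // in H; have := dvdn_leq (isT : 0 < 1) H; clear -q1 qb; lia.
      * by rewrite add0n hN in H.
  case: (leqP q (M + N)) => qL.
  + case: (q =P 2) => [q2|qn2].
    * subst q.
      case: (r =P 1) => [Er|Er].
        by subst r; move: qu; rewrite dvdn_addr.
      case: (r =P M) => [EM|EM].
        subst r; case oM: (odd M).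
          by move: qu; rewrite dvdn_addr // dvdn2 oM.
        have NM := HM (negbT oM).
        have Vq := V1 2 qp qL.
        have hN : (2 ^ b %| N) = false.
          by apply/negP => /(dvdn_leq (ltnW N1)); clear -NM; lia.
        rewrite hN in Vq; move: qv; rewrite (dvd_cong _ Vq) add0n => /(dvdn_leq s1).
        clear -NM sN; lia.
      apply: (Hrow qL); move: HB Er EM; clear; lia.
    * have q2 : 2 < q by clear -q1 qn2; lia.
      have Uq := U1 q qp q2 qL.
      case: (r =P 1) => [Er|Er].
        subst r; move: qu; rewrite (dvd_cong _ Uq); case: ifP => _ /dvdn_leS; clear -q2; lia.
      case: (r =P M) => [EM|EM].
        subst r; move: qu; rewrite (dvd_cong _ Uq); case: ifP => hM.
          by rewrite addnC dvdn_addr // => /dvdn_leS; clear -q2; lia.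
        by rewrite add0n hM.
      apply: (Hrow qL); move: HB Er EM; clear; lia.
  + have r0 : 0 < r <= M by clear -r1 rM; lia.
    case: (V3 q r qp qL r0 qu) => [[r' [s' [hr' hs' Eq]]]|qv0].
      have [pp pL] := Hp r' s' hr' hs'.
      subst q.
      have e1 : r = r' by apply: (dvd_close qu (U2 r' s' hr' hs')); clear -pL rM hr'; lia.
      have e2 : s = s'.
        by apply: (dvd_close qv1 (dvdn_trans qqb (V2 r' s' hr' hs'))); clear -pL sN hs'; lia.
      subst r' s'; move: HB hr' hs'; clear; lia.
    move: qv1; rewrite dvdn_addr // => /(dvdn_leq s1); clear -qL sN; lia.
- have hr : 1 < r < M by move: HB r1 rM; clear; lia.
  have hs : 1 < s < N by move: HB s1 sN; clear; lia.
  have [pp _] := Hp r s hr hs.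
  apply: (invis _ pp (U2 r s hr hs) (V2 r s hr hs)); clear -u0; lia.
Qed.


Lemma suff b M N : 0 < b -> 1 < M -> 1 < N -> (~~ odd M -> N < 2 ^ b) -> (b = 1 -> odd N) ->
  realizable b (rect_pattern M N).
Proof.
move=> b0 M1 N1 HM HN.
set L := M + N.
pose p r s := pseq L (r * N + s).
have p_gt r s : L < p r s := pseq_gt _ _.
have p_prime r s : prime (p r s) := pseq_prime _ _.
pose inter := [seq rs <- [seq (r, s) | r <- iota 0 M, s <- iota 0 N] | (1 < rs.1 < M) && (1 < rs.2 < N)].
have mem_inter : forall rs, (rs \in inter) = (1 < rs.1 < M) && (1 < rs.2 < N).
  move=> [r s]; rewrite mem_filter /=.
  have [H|H] := boolP ((1 < r < M) && (1 < s < N)); rewrite ?H ?(negbTE H) //=.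
  case/andP: H => /andP[_ rM] /andP[_ sN].
  by apply: (allpairs_f (fun r s => (r, s))); rewrite mem_iota add0n.
pose smalls := [seq q <- iota 0 L.+1 | prime q].
have mem_smalls q : (q \in smalls) = prime q && (q <= L).
  by rewrite mem_filter mem_iota add0n ltnS.
pose su := map inl smalls ++ map inr inter.
pose mu (i : nat + nat * nat) := match i with inl q => q | inr rs => p rs.1 rs.2 end.
pose cu (i : nat + nat * nat) := match i with
  | inl q => if (2 < q) && (q %| M) then 1 else 0
  | inr rs => p rs.1 rs.2 - rs.1 end.
have su_mem : forall i, i \in su -> match i with inl q => prime q && (q <= L)
    | inr rs => (1 < rs.1 < M) && (1 < rs.2 < N) end.
  by move=> i; rewrite mem_cat => /orP[/mapP[q + ->]|/mapP[rs + ->]];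
    rewrite ?mem_smalls ?mem_inter.
have inl_mem q : prime q -> q <= L -> inl q \in su.
  by move=> qp qL; rewrite mem_cat; apply/orP; left; apply: map_f; rewrite mem_smalls qp.
have inr_mem r s : 1 < r < M -> 1 < s < N -> inr (r, s) \in su.
  by move=> hr hs; rewrite mem_cat; apply/orP; right; apply: map_f; rewrite mem_inter /= hr hs.
have su_prime : forall i, i \in su -> prime (mu i).
  by move=> [q|rs] /su_mem /= => [/andP[]|].
have su_inj : forall i j, i \in su -> j \in su -> mu i = mu j -> i = j.
  move=> [q|[r s]] [q'|[r' s']] /su_mem /= Hi /su_mem /= Hj E.
  - by rewrite E.
  - move: Hi; rewrite E => /andP[_ h]; have := p_gt r' s'; clear -h; lia.
  - move: Hj; rewrite -E => /andP[_ h]; have := p_gt r s; clear -h; lia.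
  - have e := pseq_inj E.
    have hs : s < N by move: Hi; clear; lia.
    have hs' : s' < N by move: Hj; clear; lia.
    have er : r = r'.
      have := congr1 (divn^~ N) e; rewrite /= !divnMDl ?divn_small //; try lia.
    subst r'; have es : s = s' by move: e; clear; lia.
    by rewrite es.
have su_cop : forall i j, i \in su -> j \in su -> i != j -> coprime (mu i) (mu j).
  move=> i j hi hj nij; rewrite prime_coprime ?su_prime // dvdn_prime2 ?su_prime //.
  by apply/eqP => E; move/eqP: nij; apply; exact: su_inj.
have su_pos : forall i, i \in su -> 0 < mu i by move=> i hi; exact: prime_gt0 (su_prime i hi).
have [u [u0 Hu]] := @crt _ su mu cu su_pos su_cop.
have Ueven : 2 %| u.
  have := Hu (inl 2) (inl_mem 2 isT (ltn_addl _ N1)); rewrite /= => e.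
  by rewrite /dvdn e.
have U1 : forall q, prime q -> 2 < q -> q <= M + N -> u = (if q %| M then 1 else 0) %[mod q].
  by move=> q qp q2 qL; have := Hu (inl q) (inl_mem q qp qL); rewrite /= q2.
have U2 : forall r s, 1 < r < M -> 1 < s < N -> p r s %| u + r.
  move=> r s hr hs; have := Hu _ (inr_mem r s hr hs); rewrite /= => e.
  rewrite (dvd_cong _ e) subnK //; have := p_gt r s; clear -hr; rewrite /L; lia.
pose U := \prod_(r <- iota 1 M) (u + r).
have Upos : 0 < U by rewrite /U big_seq; apply: prodn_cond_gt0 => r _; rewrite addn_gt0 u0.
pose pi := [pred q | (L < q) && ~~ has (fun rs => p rs.1 rs.2 == q) inter].
pose W := U`_pi.
have W_notdvd : forall i, i \in su -> ~~ (mu i %| W).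
  move=> i hi; apply/negP => d.
  have : mu i \in \pi(W) by rewrite inE /= mem_primes su_prime // part_gt0 d.
  rewrite (pi_of_part pi Upos) inE /= => /andP[_ /andP[hL hh]].
  move: hi hL hh; case: i d => [q|[r s]] d /su_mem /=.
    by move=> /andP[_ h] h'; clear -h h'; lia.
  by move=> hin _ /hasP; apply; exists (r, s) => //; rewrite mem_inter.
pose sv := None :: map Some su.
pose mv (o : option (nat + nat * nat)) := if o is Some i then mu i ^ b else W.
pose cv (o : option (nat + nat * nat)) := match o with
  | None => 0
  | Some (inl q) => if q ^ b %| N then 1 else 0
  | Some (inr rs) => p rs.1 rs.2 ^ b - rs.2 end.
have Some_mem i : (Some i \in sv) = (i \in su).
  by rewrite inE /= (mem_map (@Some_inj _)).
have sv_pos : forall i, i \in sv -> 0 < mv i.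
  move=> [i|] //=; last by move=> _; apply: part_gt0.
  by rewrite Some_mem => hi; rewrite expn_gt0 prime_gt0 ?su_prime.
have sv_cop : forall i j, i \in sv -> j \in sv -> i != j -> coprime (mv i) (mv j).
  move=> [i|] [j|] //=; rewrite ?Some_mem.
  - move=> hi hj nij.
    have nij' : i != j by apply: contra nij => /eqP->.
    by rewrite coprime_pexpl // coprime_pexpr //; apply: su_cop.
  - move=> hi _ _; rewrite coprime_pexpl // prime_coprime ?su_prime //.
    exact: W_notdvd.
  - move=> _ hj _; rewrite coprime_pexpr //.
    by rewrite coprime_sym prime_coprime ?su_prime // W_notdvd.
have [v [v0 Hv]] := @crt _ sv mv cv sv_pos sv_cop.
apply: (@verify b M N u v p) => //.
- move=> q qp qL; apply: (Hv (Some (inl q))); rewrite Some_mem; exact: inl_mem.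
- move=> r s hr hs; have := Hv (Some (inr (r, s))); rewrite Some_mem => /(_ (inr_mem r s hr hs)) /= e.
  rewrite (dvd_cong _ e) subnK //.
  have h1 := p_gt r s.
  have h2 : p r s <= p r s ^ b by have := leq_pexp2l (prime_gt0 (p_prime r s)) b0; rewrite expn1.
  move: h1 h2 hs; rewrite /L; clear; lia.
- move=> q r qp qL r0 qu.
  case: (boolP (has (fun rs => p rs.1 rs.2 == q) inter)) => hh.
    left; case/hasP: hh => [[r' s']] hin /eqP E; exists r', s'.
    by move: hin; rewrite mem_inter /= => /andP[h1 h2]; split.
  right.
  have Wv : W %| v by rewrite /dvdn (Hv None (mem_head _ _)) mod0n.
  apply: dvdn_trans Wv.
  have qU : q %| U.
    apply: dvdn_trans qu _; apply: (@dvd_prod_seq _ (iota 1 M) (fun r => u + r)).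
    by rewrite mem_iota; move: r0; clear; lia.
  have : q \in \pi(W).
    by rewrite (pi_of_part pi Upos) inE /= inE /= mem_primes qp Upos qU /=; apply/andP; split => //; apply/andP; split => //.
  by rewrite inE /= mem_primes => /and3P[].
Qed.


Lemma bound_vis b M N u v : 0 < b -> 1 < M -> 1 < N ->
  (forall r s, in_box b (rect_pattern M N) r s ->
      (pmark (rect_pattern M N) r s = Circle -> bvisible b (u + r) (v + s)) /\
      (pmark (rect_pattern M N) r s = Cross -> binvisible b (u + r) (v + s))) ->
  forall r s, 0 < r <= M -> 0 < s <= N -> (r == 1) || (r == M) || (s == 1) || (s == N) ->
  forall p, prime p -> p %| u + r -> p ^ b %| v + s -> False.
Proof.
move=> b0 M1 N1 H r s hr hs hB q qp qu qv.
have hmx : maxn M N <= maxn M N ^ b.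
  by have := leq_pexp2l (leq_trans (ltnW M1) (leq_maxl M N)) b0; rewrite expn1.
have hbox : in_box b (rect_pattern M N) r s.
  rewrite /in_box /=; split.
    by have := leq_maxl M N; move: hr; clear; lia.
  by have := leq_maxr M N; move: hs hmx; clear; lia.
have [H1 _] := H r s hbox.
have : bvisible b (u + r) (v + s).
  apply: H1; rewrite /= /rect_mark.
  by rewrite (_ : (0 < r <= M) && (0 < s <= N) = true) ?hB //; rewrite hr hs.
rewrite /bvisible; apply/negP.
apply: (invis _ qp qu qv); move: hr; clear; lia.
Qed.

Lemma col_odd b M N u v : 0 < b -> 1 < M -> 1 < N -> 2 ^ b <= N ->
  (forall r s, in_box b (rect_pattern M N) r s ->
      (pmark (rect_pattern M N) r s = Circle -> bvisible b (u + r) (v + s)) /\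
      (pmark (rect_pattern M N) r s = Cross -> binvisible b (u + r) (v + s))) ->
  odd (u + 1) /\ odd (u + M).
Proof.
move=> b0 M1 N1 bN H.
set d := 2 ^ b.
have dpos : 0 < d by rewrite expn_gt0.
set s0 := d - v %% d.
have hs0 : 0 < s0 <= N.
  have := ltn_pmod v dpos; rewrite /s0; move: bN; clear; lia.
have ds0 : d %| v + s0.
  have e : v + s0 = (v %/ d).+1 * d.
    rewrite mulSn /s0; have := divn_eq v d; have := ltn_pmod v dpos.
    move: (v %/ d) (v %% d) => a c; clear; lia.
  by rewrite e dvdn_mull.
have key : forall r0, (r0 == 1) || (r0 == M) -> odd (u + r0).
  move=> r0 h0; apply/negPn/negP; rewrite -dvdn2 => d2.
  apply: (bound_vis b0 M1 N1 H (r := r0) (s := s0)) d2 ds0 => //.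
  - by move: h0 M1; clear; lia.
  - by rewrite h0.
by split; apply: key; rewrite eqxx ?orbT.
Qed.

Lemma row_odd M N u v : 1 < M -> 1 < N ->
  (forall r s, in_box 1 (rect_pattern M N) r s ->
      (pmark (rect_pattern M N) r s = Circle -> bvisible 1 (u + r) (v + s)) /\
      (pmark (rect_pattern M N) r s = Cross -> binvisible 1 (u + r) (v + s))) ->
  odd (v + 1) /\ odd (v + N).
Proof.
move=> M1 N1 H.
have [r0 [hr0 d2]] : exists r0, (r0 == 1) || (r0 == 2) /\ 2 %| u + r0.
  case o: (odd (u + 1)).
    by exists 2; split => //; move: o; rewrite dvdn2 !oddD /=; case: (odd u).
  by exists 1; split => //; rewrite dvdn2 o.
have key : forall s0, (s0 == 1) || (s0 == N) -> odd (v + s0).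
  move=> s0 h0; apply/negPn/negP; rewrite -dvdn2 => ds.
  apply: (bound_vis (isT : 0 < 1) M1 N1 H (r := r0) (s := s0)) d2 _ => //.
  - by move: hr0 M1; clear; lia.
  - by move: h0 N1; clear; lia.
  - by case/orP: h0 => ->; rewrite !orbT.
by split; apply: key; rewrite eqxx ?orbT.
Qed.

Theorem mainTheorem9 :
  forall b M N : nat, 1 <= b -> 2 <= M -> 2 <= N ->
    (b = 1 -> (realizable b (rect_pattern M N) <-> odd M /\ odd N)) /\
    (2 <= b -> (realizable b (rect_pattern M N) <-> odd M \/ N < 2 ^ b)) /\
    (forall K : nat, exists M' N' : nat,
        K <= M' /\ K <= N' /\ 2 <= M' /\ 2 <= N' /\
        realizable b (rect_pattern M' N')).
Proof.
move=> b M N b0 M1 N1; split; [|split].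
- move=> Eb; subst b; split.
    move=> [u [v [_ [_ H]]]].
    have [o1 o2] := col_odd (isT : 0 < 1) M1 N1 N1 H.
    have [o3 o4] := row_odd M1 N1 H.
    move: o1 o2 o3 o4; rewrite !oddD /=.
    by case: (odd u); case: (odd v); case: (odd M); case: (odd N).
  move=> [oM oN]; apply: suff => //; by rewrite oM.
- move=> b2; split.
    move=> [u [v [_ [_ H]]]].
    case oM: (odd M); [by left | right].
    rewrite ltnNge; apply/negP => bN.
    have [o1 o2] := col_odd b0 M1 N1 bN H.
    move: o1 o2; rewrite !oddD oM /=.
    by case: (odd u).
  move=> HH; apply: suff => //.
    by move=> oM; case: HH => //; rewrite (negbTE oM).
  by move=> E; move: b2; rewrite E.
- move=> K; exists (2 * K + 3), (2 * K + 3).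
  do 4 (split; first by clear; lia).
  have o : odd (2 * K + 3) by rewrite oddD oddM.
  by apply: suff => //; clear; lia.
Qed.
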